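(* For $n>2$, the assignment $\eta(a_{ij}^0)=a_{ij}$ and $\eta(a_{ij}^1)=\tau_i a_{ij}\tau_i$ (for $i<j$) extends to a well-defined group homomorphism $\eta\colon G_{n,\mathcal{P}}^2\to G_{n,\mathcal{D}}^2$.
   Context: $G_{n,\mathcal{P}}^2$ has generators $a_{ij}^{\epsilon}=a_{\{i,j\}}^{\epsilon}$ ($\{i,j\}\subset\{1,\dots,n\}$, $i<j$, $\epsilon\in\{0,1\}$) and relations $(a_{ij}^\epsilon)^2=1$; $a_{ij}^{\epsilon}a_{kl}^{\epsilon'}=a_{kl}^{\epsilon'}a_{ij}^{\epsilon}$ for $\{i,j\}\cap\{k,l\}=\emptyset$; $a_{ij}^{\epsilon_{ij}}a_{ik}^{\epsilon_{ik}}a_{jk}^{\epsilon_{jk}}=a_{jk}^{\epsilon_{jk}}a_{ik}^{\epsilon_{ik}}a_{ij}^{\epsilon_{ij}}$ for distinct $i,j,k$ with $\epsilon_{ij}+\epsilon_{ik}+\epsilon_{jk}\equiv0\pmod 2$. $G_{n,\mathcal{D}}^2$ ($G_n^2$ with points) has generators $a_{ij}=a_{\{i,j\}}$ ($i<j$) and $\tau_i$ ($i\in\{1,\dots,n\}$) with relations: $a_{ij}^2=1$; $a_{ij}a_{kl}=a_{kl}a_{ij}$ for distinct $i,j,k,l$; $a_{ij}a_{ik}a_{jk}=a_{jk}a_{ik}a_{ij}$ for distinct $i,j,k$; $\tau_i^2=1$; $\tau_i\tau_j=\tau_j\tau_i$; $\tau_i\tau_ja_{ij}\tau_j\tau_i=a_{ij}$;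 $a_{ij}\tau_k=\tau_ka_{ij}$ for distinct $i,j,k$. *)

(* Defs.v *)
From mathcomp Require Import all_boot.
Set Implicit Arguments. Unset Strict Implicit. Unset Printing Implicit Defensive.

(* Words in generators X and their formal inverses: (x, false) is x,
   (x, true) is x^{-1}. The free group on X is word X modulo [eqv (fun _ _ => False)]. *)
Definition word (X : Type) := seq (X * bool).

Definition gl {X : Type} (x : X) : word X := [:: (x, false)].

Definition winv {X : Type} (w : word X) : word X :=
  rev (map (fun l => (l.1, ~~ l.2)) w).

(* Congruence on words generated by the relations R and free cancellation:
   word X / eqv R is the group presented by <X | R>. *)
Inductive eqv {X : Type} (R : word X -> word X -> Prop) : word X -> word X -> Prop :=
| eqv_rel u v : R u v -> eqv R u v
| eqv_refl u : eqv R u u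
| eqv_sym u v : eqv R u v -> eqv R v u
| eqv_trans u v w : eqv R u v -> eqv R v w -> eqv R u w
| eqv_cat u u' v v' : eqv R u u' -> eqv R v v' -> eqv R (u ++ v) (u' ++ v')
| eqv_cancel x b : eqv R [:: (x, b); (x, ~~ b)] [::].

(* Substitution of generators by words: the monoid map on words induced by
   f; it induces a group homomorphism of the presented groups iff it maps
   equivalent words to equivalent words. *)
Definition wsubst {X Y : Type} (f : X -> word Y) (w : word X) : word Y :=
  flatten (map (fun l => if l.2 then winv (f l.1) else f l.1) w).

(* two-element subsets {i,j} of {1..n} (here 'I_n) *)
Definition pair2 (n : nat) := {A : {set 'I_n} | #|A| == 2}.

(* Generators of G^2_{n,P}: a_{ij}^eps, eps in {0,1} (false = 0, true = 1) *)
Definition genP (n : nat) := (pair2 n * bool)%type.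

Inductive relP (n : nat) : word (genP n) -> word (genP n) -> Prop :=
| relP_sq (p : pair2 n) (e : bool) :
    relP (gl (p, e) ++ gl (p, e)) [::]
| relP_comm (p q : pair2 n) (e e' : bool) :
    [disjoint val p & val q] ->
    relP (gl (p, e) ++ gl (q, e')) (gl (q, e') ++ gl (p, e))
| relP_tri (p q r : pair2 n) (i j k : 'I_n) (eij eik ejk : bool) :
    i != j -> i != k -> j != k ->
    val p = [set i; j] -> val q = [set i; k] -> val r = [set j; k] ->
    ~~ odd (eij + eik + ejk) ->
    relP (gl (p, eij) ++ gl (q, eik) ++ gl (r, ejk))
         (gl (r, ejk) ++ gl (q, eik) ++ gl (p, eij)).

(* Generators of G^2_{n,D}: a_{ij} (inl) and tau_i (inr) *)
Definition genD (n : nat) := (pair2 n + 'I_n)%type.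

Definition aD {n : nat} (p : pair2 n) : word (genD n) := gl (inl p).
Definition tD {n : nat} (i : 'I_n) : word (genD n) := gl (inr i).

Inductive relD (n : nat) : word (genD n) -> word (genD n) -> Prop :=
| relD_sq (p : pair2 n) : relD (aD p ++ aD p) [::]
| relD_comm (p q : pair2 n) :
    [disjoint val p & val q] -> relD (aD p ++ aD q) (aD q ++ aD p)
| relD_tri (p q r : pair2 n) (i j k : 'I_n) :
    i != j -> i != k -> j != k ->
    val p = [set i; j] -> val q = [set i; k] -> val r = [set j; k] ->
    relD (aD p ++ aD q ++ aD r) (aD r ++ aD q ++ aD p)
| relD_tsq (i : 'I_n) : relD (tD i ++ tD i) [::]
| relD_tcomm (i j : 'I_n) : relD (tD i ++ tD j) (tD j ++ tD i)
| relD_tat (p : pair2 n) (i j : 'I_n) :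
    (i < j)%N -> val p = [set i; j] ->
    relD (tD i ++ tD j ++ aD p ++ tD j ++ tD i) (aD p)
| relD_at (p : pair2 n) (k : 'I_n) :
    k \notin val p -> relD (aD p ++ tD k) (tD k ++ aD p).

(* Main.v *)
Require Import Defs.
From mathcomp Require Import all_boot.
Set Implicit Arguments. Unset Strict Implicit. Unset Printing Implicit Defensive.

Section Aux.
Variable X : Type.
Variable R : word X -> word X -> Prop.

Lemma e_sym u v : eqv R u v -> eqv R v u. Proof. exact: eqv_sym. Qed.
Lemma e_trans u v w : eqv R u v -> eqv R v w -> eqv R u w. Proof. exact: eqv_trans. Qed.
Lemma e_refl u : eqv R u u. Proof. exact: eqv_refl. Qed.
Lemma st l u v r : eqv R u v -> eqv R (l ++ u ++ r) (l ++ v ++ r).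
Proof. move=> H; apply: eqv_cat; first exact: e_refl. apply: eqv_cat => //; exact: e_refl. Qed.
Lemma e_replace u u' v v' : eqv R u u' -> eqv R v v' -> eqv R u' v' -> eqv R u v.
Proof. move=> H1 H2 H3; apply: e_trans H1 _; apply: e_trans H3 _; exact: e_sym. Qed.

Lemma winvK (w : word X) : winv (winv w) = w.
Proof.
rewrite /winv map_rev revK -map_comp -[RHS]map_id; apply: eq_map => -[x b] /=.
by rewrite negbK.
Qed.

Lemma cat_winv (w : word X) : eqv R (w ++ winv w) [::].
Proof.
elim: w => [|[x b] w IH] /=; first exact: e_refl.
rewrite /winv /= rev_cons -cats1 -/(winv w).
apply: e_trans (eqv_cancel R x b).
have := st [:: (x,b)] [:: (x, ~~ b)] IH.
by rewrite /= -catA.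
Qed.

Lemma winv_cat (w : word X) : eqv R (winv w ++ w) [::].
Proof. have := cat_winv (winv w); by rewrite winvK. Qed.
End Aux.

Lemma wsubst_cat X Y (f : X -> word Y) u v : wsubst f (u ++ v) = wsubst f u ++ wsubst f v.
Proof. by rewrite /wsubst map_cat flatten_cat. Qed.
Lemma wsubst_gl X Y (f : X -> word Y) x : wsubst f (gl x) = f x.
Proof. by rewrite /wsubst /= cats0. Qed.
Lemma wsubst_nil X Y (f : X -> word Y) : wsubst f [::] = [::].
Proof. by []. Qed.

Lemma pair_ex n (p : pair2 n) : exists i j, i != j /\ val p = [set i; j].
Proof. apply/cards2P; exact: valP p. Qed.

Lemma pair_lt n (p : pair2 n) : exists i j : 'I_n, (i < j)%N /\ val p = [set i; j].
Proof.
have [i [j [hij hp]]] := pair_ex p.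
case: (ltngtP i j) => h.
- by exists i, j.
- by exists j, i; rewrite hp setUC.
- by move/ord_inj: h => h; rewrite h eqxx in hij.
Qed.

Ltac stp l r H := apply: (e_trans (st l r H)); rewrite /=.
Ltac stq l H := apply: (e_trans (st l _ H)); rewrite /=.

Section D.
Variable n : nat.
Notation RD := (@relD n).
Notation E := (eqv RD).
Notation N0 := (@nil (genD n * bool)).
Notation LA p := ((@inl (pair2 n) (ordinal n) p, false)).
Notation LT x := ((@inr (pair2 n) (ordinal n) x, false)).

Lemma sqA p : E [:: LA p; LA p] [::]. Proof. apply: eqv_rel; exact: (relD_sq p). Qed.
Lemma sqT x : E [:: LT x; LT x] [::]. Proof. apply: eqv_rel; exact: (relD_tsq x). Qed.
Lemma sqT' x : E [::] [:: LT x; LT x]. Proof. exact/e_sym/sqT. Qed.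
Lemma commA (p q : pair2 n) : [disjoint val p & val q] -> E [:: LA p; LA q] [:: LA q; LA p].
Proof. move=> h; apply: eqv_rel; exact: (relD_comm h). Qed.
Lemma commT x y : E [:: LT x; LT y] [:: LT y; LT x].
Proof. apply: eqv_rel; exact: (relD_tcomm x y). Qed.
Lemma AT (p : pair2 n) (x : 'I_n) : x \notin val p -> E [:: LA p; LT x] [:: LT x; LA p].
Proof. move=> h; apply: eqv_rel; exact: (relD_at h). Qed.
Lemma TA (p : pair2 n) (x : 'I_n) : x \notin val p -> E [:: LT x; LA p] [:: LA p; LT x].
Proof. move=> h; exact/e_sym/AT. Qed.

Lemma conjT (p : pair2 n) (i j : 'I_n) : (i < j)%N -> val p = [set i; j] ->
  E [:: LT i; LA p; LT i] [:: LT j; LA p; LT j].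
Proof.
move=> lt hp.
have H : E [:: LT i; LT j; LA p; LT j; LT i] [:: LA p] := eqv_rel (relD_tat lt hp).
stp [:: LT i] [:: LT i] (e_sym H).
stq (@nil (genD n * bool)) (sqT i).
stp [:: LT j; LA p; LT j] (@nil (genD n * bool)) (sqT i).
exact: e_refl.
Qed.

Lemma comm10 (p q : pair2 n) x : x \notin val q -> [disjoint val p & val q] ->
  E [:: LT x; LA p; LT x; LA q] [:: LA q; LT x; LA p; LT x].
Proof.
move=> hxq h.
stq [:: LT x; LA p] (TA hxq).
stq [:: LT x] (commA h).
stq (@nil (genD n * bool)) (TA hxq).
exact: e_refl.
Qed.

Lemma comm11L (p q : pair2 n) x y : x \notin val q -> y \notin val p ->
  E [:: LT x; LA p; LT x; LT y; LA q; LT y] [:: LT x; LT y; LA p; LA q; LT x; LT y].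
Proof.
move=> hxq hyp.
stq [:: LT x; LA p] (commT x y).
stq [:: LT x; LA p; LT y] (TA hxq).
stq [:: LT x] (AT hyp).
exact: e_refl.
Qed.

Lemma comm11 (p q : pair2 n) x y : x \notin val q -> y \notin val p ->
  [disjoint val p & val q] ->
  E [:: LT x; LA p; LT x; LT y; LA q; LT y] [:: LT y; LA q; LT y; LT x; LA p; LT x].
Proof.
move=> hxq hyp h.
apply: e_trans (comm11L hxq hyp) _.
stq (@nil (genD n * bool)) (commT x y).
stq [:: LT y; LT x] (commA h).
stq [:: LT y; LT x; LA q; LA p] (commT x y).
exact: e_sym (comm11L hyp hxq).
Qed.

Lemma tri110 (p q r : pair2 n) i : i \notin val r ->
  E [:: LA p; LA q; LA r] [:: LA r; LA q; LA p] ->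
  E [:: LT i; LA p; LT i; LT i; LA q; LT i; LA r] [:: LA r; LT i; LA q; LT i; LT i; LA p; LT i].
Proof.
move=> hir H.
stq [:: LT i; LA p] (sqT i).
stq [:: LT i; LA p; LA q] (TA hir).
stq [:: LT i] H.
stq (@nil (genD n * bool)) (TA hir).
stq [:: LA r; LT i; LA q] (sqT' i).
exact: e_refl.
Qed.

Lemma tri101 (p q r : pair2 n) j : j \notin val q ->
  E [:: LA p; LA q; LA r] [:: LA r; LA q; LA p] ->
  E [:: LT j; LA p; LT j; LA q; LT j; LA r; LT j] [:: LT j; LA r; LT j; LA q; LT j; LA p; LT j].
Proof.
move=> hjq H.
stq [:: LT j; LA p] (TA hjq).
stq [:: LT j; LA p; LA q] (sqT j).
stq [:: LT j] H.
stq [:: LT j; LA r] (sqT' j).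
stq [:: LT j; LA r; LT j] (TA hjq).
exact: e_refl.
Qed.

Lemma tri011 (p q r : pair2 n) k : k \notin val p ->
  E [:: LA p; LA q; LA r] [:: LA r; LA q; LA p] ->
  E [:: LA p; LT k; LA q; LT k; LT k; LA r; LT k] [:: LT k; LA r; LT k; LT k; LA q; LT k; LA p].
Proof.
move=> hkp H.
stq [:: LA p; LT k; LA q] (sqT k).
stq (@nil (genD n * bool)) (AT hkp).
stq [:: LT k] H.
stq [:: LT k; LA r] (sqT' k).
stq [:: LT k; LA r; LT k; LT k; LA q] (AT hkp).
exact: e_refl.
Qed.

Lemma rep2 (a b a' b' : word (genD n)) : E a a' -> E b b' ->
  E (a' ++ b') (b' ++ a') -> E (a ++ b) (b ++ a).
Proof. move=> ha hb; apply: e_replace; exact: eqv_cat. Qed.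
Lemma rep3 (a b c a' b' c' : word (genD n)) : E a a' -> E b b' -> E c c' ->
  E (a' ++ b' ++ c') (c' ++ b' ++ a') -> E (a ++ b ++ c) (c ++ b ++ a).
Proof. move=> ha hb hc; apply: e_replace; do !apply: eqv_cat => //. Qed.

Section M.
Variable eta : genP n -> word (genD n).
Hypothesis eta0 : forall p : pair2 n, eta (p, false) = aD p.
Hypothesis eta1 : forall (p : pair2 n) (i j : 'I_n), (i < j)%N -> val p = [set i; j] ->
            eta (p, true) = tD i ++ aD p ++ tD i.

Definition W (e : bool) (x : 'I_n) (p : pair2 n) : word (genD n) :=
  if e then [:: LT x; LA p; LT x] else [:: LA p].

Lemma etaW (p : pair2 n) (e : bool) (x : 'I_n) : x \in val p -> E (eta (p,e)) (W e x p).
Proof.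
case: e => hx /=; last by rewrite eta0; exact: e_refl.
have [i [j [lt hp]]] := pair_lt p.
rewrite (eta1 lt hp).
move: hx; rewrite hp => /set2P [->|->]; first exact: e_refl.
exact: conjT lt hp.
Qed.

Lemma relP_ok u v : relP u v -> E (wsubst eta u) (wsubst eta v).
Proof.
case.
- move=> p e; rewrite wsubst_cat !wsubst_gl wsubst_nil.
  have [x [y [_ hp]]] := pair_ex p.
  have hx : x \in val p by rewrite hp !inE eqxx.
  apply: e_trans (eqv_cat (etaW e hx) (etaW e hx)) _.
  case: e => /=; first last. exact: sqA.
  stq [:: LT x; LA p] (sqT x).
  stq [:: LT x] (sqA p).
  exact: sqT.
- move=> p q e e' h; rewrite !wsubst_cat !wsubst_gl.
  have [x [x' [_ hp]]] := pair_ex p.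
  have [y [y' [_ hq]]] := pair_ex q.
  have hx : x \in val p by rewrite hp !inE eqxx.
  have hy : y \in val q by rewrite hq !inE eqxx.
  have hxq : x \notin val q by rewrite (disjointFr h hx).
  have hyp : y \notin val p by rewrite (disjointFl h hy).
  have h' : [disjoint val q & val p] by rewrite disjoint_sym.
  apply: (rep2 (etaW e hx) (etaW e' hy)).
  case: e; case: e' => /=.
  + exact: comm11.
  + exact: comm10.
  + exact: e_sym (comm10 hyp h').
  + exact: commA.
- move=> p q r i j k eij eik ejk hij hik hjk hp hq hr hpar.
  rewrite !wsubst_cat !wsubst_gl.
  have H : E [:: LA p; LA q; LA r] [:: LA r; LA q; LA p]
    := eqv_rel (relD_tri hij hik hjk hp hq hr).
  have ip : i \in val p by rewrite hp !inE eqxx.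
  have jp : j \in val p by rewrite hp !inE eqxx orbT.
  have iq : i \in val q by rewrite hq !inE eqxx.
  have kq : k \in val q by rewrite hq !inE eqxx orbT.
  have jr : j \in val r by rewrite hr !inE eqxx.
  have kr : k \in val r by rewrite hr !inE eqxx orbT.
  have ir : i \notin val r by rewrite hr !inE negb_or hij hik.
  have jq : j \notin val q by rewrite hq !inE negb_or eq_sym hij hjk.
  have kp : k \notin val p by rewrite hp !inE negb_or eq_sym hik eq_sym hjk.
  move: hpar; case: eij; case: eik; case: ejk => //= _.
  + apply: (rep3 (etaW _ ip) (etaW _ iq) (etaW _ jr)) => /=.
    exact: tri110.
  + apply: (rep3 (etaW _ jp) (etaW _ iq) (etaW _ jr)) => /=.
    exact: tri101.
  + apply: (rep3 (etaW _ jp) (etaW _ kq) (etaW _ kr)) => /=.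
    exact: tri011.
  + apply: (rep3 (etaW _ jp) (etaW _ kq) (etaW _ kr)) => /=.
    exact: H.
Qed.
End M.
End D.

Theorem mainTheorem4 (n : nat) (hn : (2 < n)%N)
  (eta : genP n -> word (genD n))
  (eta0 : forall p : pair2 n, eta (p, false) = aD p)
  (eta1 : forall (p : pair2 n) (i j : 'I_n), (i < j)%N -> val p = [set i; j] ->
            eta (p, true) = tD i ++ aD p ++ tD i) :
  forall u v : word (genP n),
    eqv (@relP n) u v -> eqv (@relD n) (wsubst eta u) (wsubst eta v).
Proof.
move=> u v; elim => {u v}.
- move=> u v; exact: relP_ok.
- move=> u; exact: eqv_refl.
- move=> u v _; exact: eqv_sym.
- move=> u v w _ H1 _ H2; exact: eqv_trans H1 H2.
- move=> u u' v v' _ H1 _ H2; rewrite !wsubst_cat; exact: eqv_cat.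
- move=> x b; rewrite /wsubst /=; case: b => /=; rewrite cats0.
  + exact: winv_cat.
  + exact: cat_winv.
Qed.
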